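(* For every contractor network and every $t\ge2$, $$\|\mathbf m^t-\mathbf m\|\le\Big(1+\frac{2}{1-\|(\mathbf A\mathbf W)^2\|}\Big)\,\|\mathbf r\|\,\|(\mathbf A\mathbf W)^2\|^{\lfloor t/2\rfloor}.$$ Moreover, if $G$ is acyclic (contains no directed cycle, including no self-loop) and $d>0$ denotes the maximum number of edges in a directed path of $G$, then $m_i^t=m_i$ for all $t\ge d$ and all $i\in\mathcal V$.
   Context: A contractor network is a finite directed graph $G=(\mathcal V,\mathcal E)$ with $n=|\mathcal V|$ nodes, without multiple edges (self-loops and directed cycles are allowed in general), in which every node has at least one incident edge. For $i\in\mathcal V$ let $\delta_{\mathrm{in}}(i)=\{j:(j,i)\in\mathcal E\}$ and $\delta_{\mathrm{out}}(i)=\{k:(i,k)\in\mathcal E\}$. A node $i$ is a pure principal if $\delta_{\mathrm{in}}(i)=\emptyset$, a pure obligee if $\delta_{\mathrm{out}}(i)=\emptyset$, and an intermediary otherwise. Each edge $(j,i)\in\mathcal E$ carries a weight $w_{ij}>0$; set $w_{ij}=0$ if $(j,i)\notin\mathcal E$; for every node $i$ with $\delta_{\mathrm{in}}(i)\neq\emptyset$ we have $\sum_{j\in\delta_{\mathrm{in}}(i)}w_{ij}=1$. Let $\mathbf W=(w_{ij})$. Each node has a risk score $r_i$, with $r_i\in(0,1)$ if $i$ is not a pure obligee and $r_i=0$ if $i$ is a pure obligee; $\mathbf r=(r_i)_i$. Propagation parameters: $\alpha_i=0$ for pure principals, $\alpha_i=1$ for pure obligees, $\alpha_i\in(0,1)$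 for intermediaries; $\mathbf A=\mathrm{diag}(\alpha_i)$. The mean failure probabilities are defined by $\mathbf m^0=\mathbf r$ and $\mathbf m^{t+1}=(\mathbf I-\mathbf A)\mathbf r+\mathbf A\mathbf W\mathbf m^t$ (these are $m_i^t=\mathbb E[X_i^t]$ for the failure process where the $X_i^0\sim\mathrm{Bernoulli}(r_i)$ are independent and, conditionally on the past, $X_i^{t+1}\sim\mathrm{Bernoulli}((1-\alpha_i)r_i+\alpha_i\sum_j w_{ij}X_j^t)$ independently over $i$), and $\mathbf m=\lim_t\mathbf m^t=(\mathbf I-\mathbf A\mathbf W)^{-1}(\mathbf I-\mathbf A)\mathbf r$. Norms: $\|\mathbf x\|=\max_i|x_i|$ for vectors and $\|\mathbf M\|$ = induced $\ell_\infty$ norm (maximum absolute row sum) for matrices. *)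

(* Defs.v *)
From HB Require Import structures.
From mathcomp Require Import all_boot all_order all_algebra.
Set Implicit Arguments. Unset Strict Implicit. Unset Printing Implicit Defensive.
Import Order.TTheory GRing.Theory Num.Theory.
Local Open Scope ring_scope.

Section ContractorNetwork.
Variables (R : realFieldType) (n : nat).

(* Nodes are 'I_n; E j i means the directed edge (j,i) is in the graph. *)
Definition pure_principal (E : rel 'I_n) (i : 'I_n) : bool := ~~ [exists j, E j i].
Definition pure_obligee (E : rel 'I_n) (i : 'I_n) : bool := ~~ [exists k, E i k].
Definition intermediary (E : rel 'I_n) (i : 'I_n) : bool :=
  ~~ pure_principal E i && ~~ pure_obligee E i.

(* W i j = w_ij, weight of edge (j,i). *)
Definition contractor_network (E : rel 'I_n) (W : 'M[R]_n)
    (r alpha : 'I_n -> R) : Prop :=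
  [/\ (forall i, [exists j, E j i || E i j]),
      (forall i j, E j i -> 0 < W i j),
      (forall i j, ~~ E j i -> W i j = 0) &
      (forall i, [exists j, E j i] -> \sum_j W i j = 1)] /\
  [/\ (forall i, ~~ pure_obligee E i -> 0 < r i < 1) &
      (forall i, pure_obligee E i -> r i = 0)] /\
  [/\ (forall i, pure_principal E i -> alpha i = 0),
      (forall i, pure_obligee E i -> alpha i = 1) &
      (forall i, intermediary E i -> 0 < alpha i < 1)].

Definition Amx (alpha : 'I_n -> R) : 'M[R]_n := diag_mx (\row_i alpha i).
Definition rvec (r : 'I_n -> R) : 'cV[R]_n := \col_i r i.

Fixpoint mseq (W : 'M[R]_n) (r alpha : 'I_n -> R) (t : nat) : 'cV[R]_n :=
  match t with
  | 0 => rvec r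
  | t'.+1 => (1%:M - Amx alpha) *m rvec r + (Amx alpha *m W) *m mseq W r alpha t'
  end.

Definition mlim (W : 'M[R]_n) (r alpha : 'I_n -> R) : 'cV[R]_n :=
  invmx (1%:M - Amx alpha *m W) *m ((1%:M - Amx alpha) *m rvec r).

Definition vnorm (x : 'cV[R]_n) : R := \big[Num.max/0]_(i < n) `|x i 0|.
Definition mnorm (M : 'M[R]_n) : R := \big[Num.max/0]_(i < n) \sum_(j < n) `|M i j|.

Definition acyclic (E : rel 'I_n) : Prop :=
  forall i j : 'I_n, E i j -> ~~ connect E j i.

Definition max_path_length (E : rel 'I_n) (d : nat) : Prop :=
  (exists (x : 'I_n) (p : seq 'I_n), path E x p /\ size p = d) /\
  (forall (x : 'I_n) (p : seq 'I_n), path E x p -> (size p <= d)%N).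

End ContractorNetwork.

(* Main.v *)
Require Import Defs.
From HB Require Import structures.
From mathcomp Require Import all_boot all_order all_algebra.
Import Order.TTheory GRing.Theory Num.Theory.
Local Open Scope ring_scope.
From mathcomp Require Import lra.
Set Implicit Arguments. Unset Strict Implicit.

Lemma vnorm_ge0 (R : realFieldType) (n : nat) (x : 'cV[R]_n) : 0 <= vnorm x.
Proof.
rewrite /vnorm; elim/big_ind: _ => //.
by move=> a b Ha Hb; rewrite le_max Ha.
Qed.

Lemma le_vnorm (R : realFieldType) (n : nat) (x : 'cV[R]_n) i : `|x i 0| <= vnorm x.
Proof. exact: (le_bigmax 0 (fun i : 'I_n => `|x i 0|) i). Qed.

Lemma vnorm_le (R : realFieldType) (n : nat) (x : 'cV[R]_n) c :
  0 <= c -> (forall i, `|x i 0| <= c) -> vnorm x <= c.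
Proof. by move=> c0 H; apply: bigmax_le. Qed.

Lemma mnorm_ge0 (R : realFieldType) (n : nat) (M : 'M[R]_n) : 0 <= mnorm M.
Proof.
rewrite /mnorm; elim/big_ind: _ => //.
  by move=> a b Ha Hb; rewrite le_max Ha.
by move=> i _; apply: sumr_ge0 => j _.
Qed.

Lemma le_mnorm (R : realFieldType) (n : nat) (M : 'M[R]_n) i :
  \sum_j `|M i j| <= mnorm M.
Proof. exact: (le_bigmax 0 (fun i : 'I_n => \sum_j `|M i j|) i). Qed.

Lemma vnormD (R : realFieldType) (n : nat) (x y : 'cV[R]_n) :
  vnorm (x + y) <= vnorm x + vnorm y.
Proof.
apply: vnorm_le; first by rewrite addr_ge0 ?vnorm_ge0.
move=> i; rewrite mxE; apply: (le_trans (ler_normD _ _)).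
by rewrite lerD ?le_vnorm.
Qed.

Lemma vnormN (R : realFieldType) (n : nat) (x : 'cV[R]_n) :
  vnorm (- x) = vnorm x.
Proof.
apply/eqP; rewrite eq_le; apply/andP; split; apply: vnorm_le; rewrite ?vnorm_ge0 //.
  by move=> i; rewrite mxE normrN le_vnorm.
by move=> i; have := @le_vnorm _ _ (- x) i; rewrite mxE normrN.
Qed.

Lemma vnorm_mul (R : realFieldType) (n : nat) (M : 'M[R]_n) (x : 'cV[R]_n) :
  vnorm (M *m x) <= mnorm M * vnorm x.
Proof.
apply: vnorm_le; first by rewrite mulr_ge0 ?mnorm_ge0 ?vnorm_ge0.
move=> i; rewrite mxE; apply: (le_trans (ler_norm_sum _ _ _)).
apply: (@le_trans _ _ (\sum_j `|M i j| * vnorm x)).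
  by apply: ler_sum => j _; rewrite normrM ler_wpM2l ?le_vnorm.
by rewrite -mulr_suml ler_wpM2r ?vnorm_ge0 ?le_mnorm.
Qed.

Lemma alpha_bnd (R : realFieldType) (n : nat) (E : rel 'I_n)
    (W : 'M[R]_n) (r alpha : 'I_n -> R) :
  contractor_network E W r alpha -> forall i, 0 <= alpha i <= 1.
Proof.
move=> [_ [_ [a0 a1 aint]]] i.
case Hp: (pure_principal E i); first by rewrite a0 // lexx ler01.
case Ho: (pure_obligee E i); first by rewrite a1 // ler01 lexx.
have /andP[h1 h2] : 0 < alpha i < 1 by apply: aint; rewrite /intermediary Hp Ho.
by rewrite ltW // ltW.
Qed.

Lemma alpha_lt1 (R : realFieldType) (n : nat) (E : rel 'I_n)
    (W : 'M[R]_n) (r alpha : 'I_n -> R) :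
  contractor_network E W r alpha -> forall k i, E k i -> alpha k < 1.
Proof.
move=> [_ [_ [a0 a1 aint]]] k i Eki.
case Hp: (pure_principal E k); first by rewrite a0.
have Ho : pure_obligee E k = false.
  by apply/negbTE; rewrite negbK; apply/existsP; exists i.
by have /andP[] : 0 < alpha k < 1 by apply: aint; rewrite /intermediary Hp Ho.
Qed.

Lemma W_ge0 (R : realFieldType) (n : nat) (E : rel 'I_n)
    (W : 'M[R]_n) (r alpha : 'I_n -> R) :
  contractor_network E W r alpha -> forall i j, 0 <= W i j.
Proof.
move=> [[_ Wp W0 _] _] i j.
case Eji: (E j i); first by rewrite ltW // Wp.
by rewrite W0 ?Eji.
Qed.

Lemma Wsum_le1 (R : realFieldType) (n : nat) (E : rel 'I_n)
    (W : 'M[R]_n) (r alpha : 'I_n -> R) :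
  contractor_network E W r alpha -> forall i, \sum_j W i j <= 1.
Proof.
move=> [[_ Wp W0 Ws] _] i.
case Ex: [exists j, E j i]; first by rewrite Ws.
rewrite big1 ?ler01 // => j _; apply: W0.
by move/negbT/existsPn: Ex.
Qed.

Lemma Bentry (R : realFieldType) (n : nat) (W : 'M[R]_n) (alpha : 'I_n -> R) i j :
  (Amx alpha *m W) i j = alpha i * W i j.
Proof. by rewrite /Amx mul_diag_mx !mxE. Qed.

Lemma B_ge0 (R : realFieldType) (n : nat) (E : rel 'I_n)
    (W : 'M[R]_n) (r alpha : 'I_n -> R) :
  contractor_network E W r alpha -> forall i j, 0 <= (Amx alpha *m W) i j.
Proof.
move=> H i j; rewrite Bentry mulr_ge0 ?(W_ge0 H) //.
by case/andP: (alpha_bnd H i).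
Qed.

Lemma Brow (R : realFieldType) (n : nat) (E : rel 'I_n)
    (W : 'M[R]_n) (r alpha : 'I_n -> R) :
  contractor_network E W r alpha -> forall i,
  \sum_j (Amx alpha *m W) i j <= alpha i.
Proof.
move=> H i; rewrite (eq_bigr (fun j => alpha i * W i j)); last by move=> j _; rewrite Bentry.
rewrite -mulr_sumr; case/andP: (alpha_bnd H i) => a0 a1.
by rewrite -[X in _ <= X]mulr1 ler_wpM2l // (Wsum_le1 H).
Qed.

Lemma mnormB_le1 (R : realFieldType) (n : nat) (E : rel 'I_n)
    (W : 'M[R]_n) (r alpha : 'I_n -> R) :
  contractor_network E W r alpha -> mnorm (Amx alpha *m W) <= 1.
Proof.
move=> H; apply: bigmax_le => // i _.
rewrite (eq_bigr (fun j => (Amx alpha *m W) i j)); last by move=> j _; rewrite ger0_norm // (B_ge0 H).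
apply: le_trans (Brow H i) _; by case/andP: (alpha_bnd H i).
Qed.

Lemma mnormB2_lt1 (R : realFieldType) (n : nat) (E : rel 'I_n)
    (W : 'M[R]_n) (r alpha : 'I_n -> R) :
  contractor_network E W r alpha ->
  mnorm ((Amx alpha *m W) *m (Amx alpha *m W)) < 1.
Proof.
move=> H; set B := Amx alpha *m W.
rewrite /mnorm; elim/big_ind: _ => //.
  by move=> x y Hx Hy; rewrite gt_max Hx.
move=> i _.
have Bge0 := B_ge0 H.
have e1 : \sum_j `|(B *m B) i j| = \sum_k B i k * (\sum_j B k j).
  rewrite (eq_bigr (fun j => \sum_k B i k * B k j)); last first.
    by move=> j _; rewrite mxE ger0_norm // sumr_ge0 // => k _; rewrite mulr_ge0.
  by rewrite exchange_big /=; apply: eq_bigr => k _; rewrite mulr_sumr.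
rewrite e1.
have sk : forall k, \sum_j B k j <= alpha k by move=> k; apply: (Brow H).
have le1 : forall k, B i k * \sum_j B k j <= B i k.
  move=> k; rewrite -[X in _ <= X]mulr1 ler_wpM2l //.
  by apply: le_trans (sk k) _; case/andP: (alpha_bnd H k).
have sumBi : \sum_k B i k <= alpha i by apply: (Brow H).
case/andP: (alpha_bnd H i) => ai0 ai1.
case: (ltrP (alpha i) 1) => ai.
  apply: le_lt_trans ai; apply: le_trans sumBi.
  by apply: ler_sum => k _; apply: le1.
have ai1' : alpha i = 1 by apply/eqP; rewrite eq_le ai1 ai.
case Ex: [exists k, E k i].
  case/existsP: Ex => k0 Ek0.
  move: H => H'; case: (H') => [[_ Wp W0 Ws] _].
  apply: lt_le_trans (_ : \sum_k B i k <= 1); last by rewrite -ai1'.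
  rewrite (bigD1 k0) //= [X in _ < X](bigD1 k0) //=.
  apply: ltr_leD; last by apply: ler_sum => k _; apply: le1.
  have Bpos : 0 < B i k0 by rewrite /B Bentry ai1' mul1r Wp.
  rewrite -[X in _ < X]mulr1 ltr_pM2l //.
  by apply: le_lt_trans (sk k0) _; apply: (alpha_lt1 H' Ek0).
case: H => [[_ Wp W0 Ws] _].
rewrite big1 ?ltr01 // => k _.
by rewrite /B Bentry W0 ?mulr0 ?mul0r //; move/negbT/existsPn: Ex.
Qed.

Lemma ker_trivial (R : realFieldType) (n : nat) (B : 'M[R]_n) (x : 'cV[R]_n) :
  mnorm (B *m B) < 1 -> (1%:M - B) *m x = 0 -> x = 0.
Proof.
move=> hq hx.
have e1 : x = B *m x by apply/eqP; rewrite -subr_eq0 -[X in X - _]mul1mx -mulmxBl hx.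
have e2 : x = (B *m B) *m x by rewrite -mulmxA -!e1.
have hv : vnorm x <= mnorm (B *m B) * vnorm x.
  by rewrite {1}e2; apply: vnorm_mul.
have v0 : vnorm x <= 0.
  have := vnorm_ge0 x; have := mnorm_ge0 (B *m B); nra.
apply/matrixP => i j; rewrite mxE (ord1 j); apply/eqP; rewrite -normr_le0.
exact: le_trans (le_vnorm x i) v0.
Qed.

Lemma unit_IB (R : realFieldType) (n : nat) (B : 'M[R]_n) :
  mnorm (B *m B) < 1 -> (1%:M - B) \in unitmx.
Proof.
move=> hq; set M := 1%:M - B.
rewrite -unitmx_tr -row_free_unit -kermx_eq0.
set K := kermx _.
have hK : M *m K^T = 0.
  by rewrite -[M]trmxK -trmx_mul mulmx_ker trmx0.
have hT : K^T = 0.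
  apply/matrixP => a b.
  set x : 'cV[R]_n := \col_i K^T i b.
  have hx : M *m x = 0.
    apply/matrixP => i j; rewrite !mxE.
    have := congr1 (fun Z : 'M[R]_n => Z i b) hK; rewrite !mxE => h.
    by apply: etrans h; apply: eq_bigr => k _; congr (_ * _); rewrite /x mxE.
  have := congr1 (fun Z : 'cV[R]_n => Z a 0) (ker_trivial hq hx).
  by rewrite !mxE.
by rewrite -[K]trmxK hT trmx0.
Qed.

Lemma fixpt (R : realFieldType) (n : nat) (E : rel 'I_n)
    (W : 'M[R]_n) (r alpha : 'I_n -> R) :
  contractor_network E W r alpha ->
  mlim W r alpha = (1%:M - Amx alpha) *m rvec r + (Amx alpha *m W) *m mlim W r alpha.
Proof.
move=> H; have hu := unit_IB (mnormB2_lt1 H).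
have h : (1%:M - Amx alpha *m W) *m mlim W r alpha = (1%:M - Amx alpha) *m rvec r.
  by rewrite /mlim mulKVmx.
by rewrite -h mulmxBl mul1mx subrK.
Qed.

Lemma err_step (R : realFieldType) (n : nat) (E : rel 'I_n)
    (W : 'M[R]_n) (r alpha : 'I_n -> R) t :
  contractor_network E W r alpha ->
  mseq W r alpha t.+1 - mlim W r alpha =
  (Amx alpha *m W) *m (mseq W r alpha t - mlim W r alpha).
Proof.
move=> H; rewrite [in LHS](fixpt H) /= mulmxBr.
by rewrite opprD addrACA subrr add0r.
Qed.

Lemma err_decay (R : realFieldType) (n : nat) (E : rel 'I_n)
    (W : 'M[R]_n) (r alpha : 'I_n -> R) t :
  contractor_network E W r alpha ->
  vnorm (mseq W r alpha t - mlim W r alpha) <=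
  mnorm ((Amx alpha *m W) *m (Amx alpha *m W)) ^+ (t./2) *
  vnorm (mseq W r alpha 0 - mlim W r alpha).
Proof.
move=> H; set B := Amx alpha *m W; set e := fun t => mseq W r alpha t - mlim W r alpha.
set q := mnorm (B *m B).
have hq0 : 0 <= q by apply: mnorm_ge0.
have ES := fun t => @err_step _ _ _ _ _ _ t H.
suff : vnorm (e t) <= q ^+ t./2 * vnorm (e 0%N) /\
       vnorm (e t.+1) <= q ^+ t.+1./2 * vnorm (e 0%N) by case.
elim: t => [|t [IH1 IH2]].
  split; first by rewrite expr0 mul1r.
  rewrite /e ES expr0 mul1r.
  apply: le_trans (vnorm_mul _ _) _.
  by rewrite ler_piMl ?vnorm_ge0 ?(mnormB_le1 H).
split=> //.
rewrite /e !ES mulmxA.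
apply: le_trans (vnorm_mul _ _) _.
rewrite /= exprS -mulrA ler_wpM2l //.
Qed.

Lemma y_entry (R : realFieldType) (n : nat) (r alpha : 'I_n -> R) i :
  ((1%:M - Amx alpha) *m rvec r) i 0 = (1 - alpha i) * r i.
Proof. by rewrite mulmxBl mul1mx /Amx mul_diag_mx !mxE mulrBl mul1r. Qed.

Lemma vnorm_y (R : realFieldType) (n : nat) (E : rel 'I_n)
    (W : 'M[R]_n) (r alpha : 'I_n -> R) :
  contractor_network E W r alpha ->
  vnorm ((1%:M - Amx alpha) *m rvec r) <= vnorm (rvec r).
Proof.
move=> H; apply: vnorm_le; first exact: vnorm_ge0.
move=> i; rewrite y_entry; case/andP: (alpha_bnd H i) => a0 a1.
rewrite normrM ger0_norm ?subr_ge0 //.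
apply: le_trans (_ : `|r i| <= _); last by have := @le_vnorm _ _ (rvec r) i; rewrite mxE.
by rewrite ler_piMl // lerBlDr lerDl.
Qed.

Lemma vnorm_m (R : realFieldType) (n : nat) (E : rel 'I_n)
    (W : 'M[R]_n) (r alpha : 'I_n -> R) :
  contractor_network E W r alpha ->
  vnorm (mlim W r alpha) <=
  2 / (1 - mnorm ((Amx alpha *m W) *m (Amx alpha *m W))) * vnorm (rvec r).
Proof.
move=> H; set B := Amx alpha *m W; set q := mnorm (B *m B).
set m := mlim W r alpha; set y := (1%:M - Amx alpha) *m rvec r.
have hq := mnormB2_lt1 H; rewrite -/B -/q in hq.
have hfx : m = y + B *m (y + B *m m).
  have fx := fixpt H; rewrite -/B -/y -/m in fx.
  by rewrite {1}fx; congr (_ + _ *m _).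
have hfx2 : m = y + B *m y + (B *m B) *m m by rewrite {1}hfx mulmxDr mulmxA addrA.
have h1 : vnorm m <= vnorm y + vnorm y + q * vnorm m.
  rewrite {1}hfx2; apply: le_trans (vnormD _ _) _; rewrite lerD ?vnorm_mul //.
  apply: le_trans (vnormD _ _) _; rewrite lerD //.
  apply: le_trans (vnorm_mul _ _) _; rewrite ler_piMl ?vnorm_ge0 //.
  exact: mnormB_le1 H.
have hy := vnorm_y H; rewrite -/y in hy.
rewrite mulrAC ler_pdivlMr ?subr_gt0 //.
nra.
Qed.

Lemma walk_back (R : realFieldType) (n : nat) (E : rel 'I_n)
    (W : 'M[R]_n) (r alpha : 'I_n -> R) :
  contractor_network E W r alpha ->
  forall t i, (mseq W r alpha t - mlim W r alpha) i 0 != 0 ->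
  exists x p, [/\ path E x p, size p = t, last x p = i &
      (mseq W r alpha 0 - mlim W r alpha) x 0 != 0].
Proof.
move=> H; elim=> [|t IH] i hi; first by exists i, [::].
move: hi; rewrite (err_step _ H) mxE.
case: (pickP (fun k => (Amx alpha *m W) i k * (mseq W r alpha t - mlim W r alpha) k 0 != 0)) => [k /= hk | hn]; last first.
  by rewrite big1 ?eqxx // => k _; move: (hn k) => /= /negbFE /eqP.
move=> _; move: hk; rewrite mulf_eq0 negb_or => /andP[hB he].
have [x [p [hp hs hl hx]]] := IH k he.
exists x, (rcons p i); split=> //.
- rewrite rcons_path hp hl /=.
  case: H => [[_ _ W0 _] _]; apply/negPn/negP => nE.
  by move: hB; rewrite Bentry W0 ?mulr0 ?eqxx.
- by rewrite size_rcons hs.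
- by rewrite last_rcons.
Qed.

Lemma principal_zero (R : realFieldType) (n : nat) (E : rel 'I_n)
    (W : 'M[R]_n) (r alpha : 'I_n -> R) :
  contractor_network E W r alpha ->
  forall x, pure_principal E x -> (mseq W r alpha 0 - mlim W r alpha) x 0 = 0.
Proof.
move=> H x hx.
have a0 : alpha x = 0 by case: H => _ [_ [a0 _ _]]; apply: a0.
have fx := congr1 (fun Z : 'cV[R]_n => Z x 0) (fixpt H); simpl in fx.
have -> : (mseq W r alpha 0 - mlim W r alpha) x 0 = r x - mlim W r alpha x 0 by rewrite !mxE.
rewrite fx mxE y_entry a0 subr0 mul1r mxE.
rewrite big1 ?addr0 ?subrr // => k _.
by rewrite Bentry a0 !mul0r.
Qed.
Unset Implicit Arguments. Set Strict Implicit.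
Theorem mainTheorem5 (R : realFieldType) (n : nat) (E : rel 'I_n)
    (W : 'M[R]_n) (r alpha : 'I_n -> R) :
  contractor_network E W r alpha ->
  (forall t : nat, (2 <= t)%N ->
     let AW := Amx alpha *m W in
     let q := mnorm (AW *m AW) in
     vnorm (mseq W r alpha t - mlim W r alpha)
       <= (1 + 2 / (1 - q)) * vnorm (rvec r) * q ^+ (t./2)) /\
  (acyclic E -> forall d : nat, max_path_length E d -> (0 < d)%N ->
     forall t : nat, (d <= t)%N -> forall i : 'I_n,
       mseq W r alpha t i 0 = mlim W r alpha i 0).
Proof.
move=> H; split.
  move=> t _; cbv zeta.
  apply: le_trans (err_decay t H) _.
  rewrite [X in _ <= X]mulrC ler_wpM2l ?exprn_ge0 ?mnorm_ge0 //=.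
  apply: le_trans (vnormD _ _) _.
  rewrite vnormN mulrDl mul1r lerD //.
  exact: vnorm_m H.
move=> _ d [_ Hd] _ t hdt i.
have he : (mseq W r alpha t - mlim W r alpha) i 0 = 0.
  case: (eqVneq ((mseq W r alpha t - mlim W r alpha) i 0) 0) => // hne.
  have [x [p [hp hs hl hx]]] := walk_back H hne.
  case hpp : (pure_principal E x).
    by move: hx; rewrite (principal_zero H hpp) eqxx.
  move: hpp; rewrite /pure_principal => /negbFE /existsP [k Ekx].
  have := Hd k (x :: p); rewrite /= Ekx hp hs => /(_ isT) hle.
  by have := leq_trans hle hdt; rewrite ltnn.
by apply/eqP; rewrite -subr_eq0; move: he; rewrite !mxE => ->.
Qed.
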